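(* Let $q$ be a prime power and $m$ a positive integer such that $q>2m+1$ and $q\not\equiv 0,1 \pmod{2i+1}$ for every $i\in\{1,\ldots,m\}$. Then $M(q-m,\,q-2m-1)\ge q(q-1)$.
   Context: For positive integers $n,d$, $M(n,d)$ denotes the maximum size of a permutation array on $n$ symbols (a non-empty subset of the symmetric group $S_n$) with Hamming distance $d$, i.e. in which any two distinct permutations differ in at least $d$ positions; the Hamming distance of $\sigma,\tau\in S_n$ is $|\{x:\sigma(x)\neq\tau(x)\}|$. *)

(* Defs.v *)
From mathcomp Require Import all_boot all_fingroup.
Set Implicit Arguments. Unset Strict Implicit. Unset Printing Implicit Defensive.

Definition hamming (n : nat) (s t : {perm 'I_n}) : nat := #|[set x | s x != t x]|.

Definition perm_array (n d : nat) (A : {set {perm 'I_n}}) : bool :=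
  (A != set0) && [forall s in A, forall t in A, (s != t) ==> (d <= hamming s t)].

Definition M (n d : nat) : nat :=
  \max_(A : {set {perm 'I_n}} | perm_array d A) #|A|.

Definition prime_power (q : nat) : Prop :=
  exists p k, prime p /\ 0 < k /\ q = p ^ k.

(* Main.v *)
Require Import Defs.
From mathcomp Require Import all_boot all_fingroup.
From mathcomp Require Import zify.
Set Implicit Arguments. Unset Strict Implicit. Unset Printing Implicit Defensive.

Section Comb.
Variable T : finType.

Definition contr (p : T) (s : {perm T}) : {perm T} := (tperm p ((s^-1)%g p) * s)%g.
Fixpoint contrs (ps : seq T) (s : {perm T}) : {perm T} :=
  match ps with [::] => s | p :: ps' => contrs ps' (contr p s) end.

Definition invs (f : T -> T) (U : {set T}) := [forall x in U, f x \in U].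

Definition goodfam (f : T -> T) (Z : {set T}) (r : nat) (fam : seq {set T}) :=
  [/\ all (fun U : {set T} => [&& invs f U, odd #|U| & [disjoint U & Z]]) fam,
      pairwise (fun U V : {set T} => [disjoint U & V]) fam &
      sumn [seq #|U|./2 | U : {set T} <- fam] <= r].

Lemma sumn_filter (A : eqType) (f : A -> nat) (P : pred A) s :
  sumn [seq f x | x <- s] = sumn [seq f x | x <- filter P s] + sumn [seq f x | x <- filter (predC P) s].
Proof. elim: s => //= x s IH; case: (P x) => /=; rewrite IH; lia. Qed.

Lemma sumn_one (A : eqType) (f : A -> nat) s x : x \in s -> f x <= sumn [seq f x | x <- s].
Proof. elim: s => //= y s IH; rewrite inE => /orP [/eqP -> | /IH]; lia. Qed.

Lemma sumn_two (A : eqType) (f : A -> nat) s x y : x \in s -> y \in s -> x != y ->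
  f x + f y <= sumn [seq f x | x <- s].
Proof.
move=> xs ys xy; rewrite (perm_sumn (perm_map f (perm_to_rem xs))) /=.
have : y \in rem x s by move: ys; rewrite (perm_mem (perm_to_rem xs)) inE eq_sym (negbTE xy).
by move/(sumn_one f); rewrite leq_add2l.
Qed.

Lemma pairwise_mem (A : eqType) (r : rel A) s x y : symmetric r -> pairwise r s ->
  x \in s -> y \in s -> x != y -> r x y.
Proof.
move=> sr; elim: s => // z s IH; rewrite pairwise_cons => /andP [/allP az ps].
rewrite !inE => /orP [/eqP -> | xs] /orP [/eqP -> | ys]; rewrite ?eqxx //.
- by move=> _; apply: az.
- by move=> _; rewrite sr; apply: az.
- by apply: IH.
Qed.

Lemma count_disj (x : T) fam : pairwise (fun U V : {set T} => [disjoint U & V]) fam ->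
  count (fun U : {set T} => x \in U) fam <= 1.
Proof.
elim: fam => // U fam IH; rewrite pairwise_cons /= => /andP [/allP aU pf].
case xU: (x \in U) => /=; last exact: IH.
suff -> : count (fun U0 : {set T} => x \in U0) fam = 0 by [].
apply/eqP; rewrite -leqn0 leqNgt -has_count; apply/hasP => [[V Vf xV]].
by move: (aU V Vf) => /disjointFr /(_ xU); rewrite xV.
Qed.


Lemma contr_rel p (s t : {perm T}) x :
  (s^-1)%g (t x) = tperm p ((s^-1)%g p) (((contr p s)^-1)%g ((contr p t) (tperm p ((t^-1)%g p) x))).
Proof. by rewrite /contr !invMg tpermV !permM tpermK tpermK. Qed.

Lemma stay (U : {set T}) p a y : y \in U -> p \notin U -> a \notin U -> tperm p a y = y.
Proof.
move=> yU pU aU; rewrite tpermD //.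
- by apply: contraNneq pU => ->.
- by apply: contraNneq aU => ->.
Qed.

Lemma disjP (A B : {set T}) : (forall x, x \in A -> x \in B -> False) -> [disjoint A & B].
Proof. move=> h; rewrite -setI_eq0; apply/eqP/setP => x; rewrite !inE; apply/negP => /andP [xa xb]; exact: h x xa xb. Qed.

Lemma key (ps : seq T) : forall (Z : {set T}) (s t : {perm T}) (g : nat),
  uniq ps -> all (fun p => p \notin Z) ps ->
  size ps + g <= #|[set x | [&& x \notin Z, x \notin ps & contrs ps s x == contrs ps t x]]| ->
  exists fam, g <= size fam /\ goodfam (fun x => (s^-1)%g (t x)) Z (size ps) fam.
Proof.
elim: ps => [|p ps IH] Z s t g.
- move=> _ _ /=; set A := [set x | _] => Hg.
  exists [seq [set x] | x <- take g (enum A)]; split.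
    by rewrite size_map size_takel // -cardE.
  split.
  + apply/allP => U /mapP [x xin ->].
    have : x \in A by rewrite -mem_enum; apply: mem_take xin.
    rewrite inE => /andP [xZ /eqP e].
    rewrite cards1 /= disjoints1 xZ andbT; apply/forallP => y; apply/implyP.
    by rewrite !in_set1 => /eqP ->; rewrite -e permK.
  + rewrite pairwise_map; have hu : pairwise [rel x y | x != y] (take g (enum A)) by rewrite -uniq_pairwise take_uniq // enum_uniq.
    apply: sub_pairwise hu => x y /= xy; rewrite disjoints1 in_set1 //.
  + by elim: (take g (enum A)) => //= x l IHl; rewrite cards1.
move=> /= /andP [pnps ups] /andP [pnZ allZ] Hc.
set s' := contr p s; set t' := contr p t.
have Hc' : size ps + g.+1 <=
   #|[set x | [&& x \notin p |: Z, x \notin ps & contrs ps s' x == contrs ps t' x]]|.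
  apply: (leq_trans _ (leq_trans Hc _)); first by rewrite addnS.
  apply: subset_leq_card; apply/subsetP => x; rewrite !inE.
  by case: (x == p); case: (x \in Z); case: (x \in ps).
have allZ' : all (fun q => q \notin p |: Z) ps.
  apply/allP => q qps; rewrite !inE negb_or (allP allZ q qps) andbT.
  by apply: contraNneq pnps => <-.
have [fam' [szf [allf pwf sumf]]] := IH (p |: Z) s' t' g.+1 ups allZ' Hc'.
set a := (s^-1)%g p; set b := (t^-1)%g p.
set pi := fun x => (s^-1)%g (t x); set pi' := fun x => (s'^-1)%g (t' x).
have Hpi : forall x, pi x = tperm p a (pi' (tperm p b x)) by move=> x; apply: contr_rel.
have Hb : pi b = a by rewrite /pi /b permKV.
have hU : forall U, U \in fam' -> [/\ forall x, x \in U -> pi' x \in U, odd #|U|,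
                                  p \notin U & [disjoint U & Z]].
  move=> U Uf; case/and3P: (allP allf U Uf) => /forallP iU oU dU; split => //.
  - by move=> x xU; move: (iU x); rewrite xU.
  - by apply/negP => pU; move: (disjointFl dU (setU11 p Z)); rewrite pU.
  - by apply: disjointWr dU; apply: subsetUr.
set P := fun U : {set T} => (a \notin U) && (b \notin U).
set K := filter P fam'.
have goodK : goodfam pi Z (size ps) K.
  split.
  - apply/allP => U; rewrite mem_filter => /andP [/andP [aU bU] Uf].
    have [iU oU pU dU] := hU U Uf; apply/and3P; split => //.
    apply/forallP => x; apply/implyP => xU.
    by rewrite Hpi (stay xU pU bU) (stay (iU x xU) pU aU) iU.
  - exact: pairwise_filter.
  - apply: leq_trans sumf; rewrite (sumn_filter _ P fam'); apply: leq_addr.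
have Hsz : size K + count (predC P) fam' = size fam' by rewrite size_filter count_predC.
case: (leqP (count (predC P) fam') 1) => Hcnt.
  exists K; split; first by clear -szf Hsz Hcnt; lia.
  by case: goodK => h1 h2 h3; split => //; apply: leq_trans h3 _.
have ca := count_disj a pwf; have cb := count_disj b pwf.
have := count_predUI (fun U : {set T} => a \in U) (fun U : {set T} => b \in U) fam'.
have -> : count (predU (fun U : {set T} => a \in U) (fun U : {set T} => b \in U)) fam'
        = count (predC P) fam'.
  by apply: eq_count => U; rewrite /= /P negb_and !negbK.
move=> Hcount.
have hab : ~~ has (predI (fun U : {set T} => a \in U) (fun U : {set T} => b \in U)) fam'.
  by rewrite has_count; clear -ca cb Hcount Hcnt; lia.
have /hasP [Ua Uaf aUa] : has (fun U : {set T} => a \in U) fam' by rewrite has_count; clear -ca cb Hcount Hcnt; lia.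
have /hasP [Ub Ubf bUb] : has (fun U : {set T} => b \in U) fam' by rewrite has_count; clear -ca cb Hcount Hcnt; lia.
have bUa : b \notin Ua by apply: contra (hasPn hab Ua Uaf) => bU; rewrite /= aUa.
have aUb : a \notin Ub by apply: contra (hasPn hab Ub Ubf) => aU; rewrite /= bUb andbT.
have neab : Ua != Ub by apply: contraNneq aUb => <-.
have dab : [disjoint Ua & Ub].
  by apply: (pairwise_mem _ pwf) => // U V; rewrite disjoint_sym.
have [iUa oUa pUa dUa] := hU Ua Uaf; have [iUb oUb pUb dUb] := hU Ub Ubf.
set W := p |: (Ua :|: Ub).
have cW : #|W| = (#|Ua| + #|Ub|).+1.
  by rewrite cardsU1 !inE negb_or pUa pUb cardsU (disjoint_setI0 dab) cards0 subn0.
have stayW : forall U y, U \in fam' -> y \in U -> a \notin U -> tperm p a y \in U.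
  by move=> U y Uf yU aU; have [_ _ pU _] := hU U Uf; rewrite (stay yU pU aU).
exists (W :: K); split.
  rewrite /= ; clear -szf Hsz Hcnt ca cb Hcount; lia.
case: goodK => gK1 gK2 gK3; split.
- rewrite /= gK1 andbT; apply/and3P; split.
  + apply/forallP => x; apply/implyP; rewrite !inE => /or3P [/eqP -> | xUa | xUb].
    * rewrite Hpi tpermL (stayW Ub _ Ubf (iUb b bUb) aUb); by rewrite !orbT.
    * rewrite Hpi (stay xUa pUa bUa).
      case: (eqVneq (pi' x) a) => [e|ne]; first by rewrite e tpermR eqxx.
      rewrite tpermD; [by rewrite (iUa x xUa) orbT | by apply: contraNneq pUa => ->; apply: iUa | by rewrite eq_sym].
    * case: (eqVneq x b) => [e|ne]; first by rewrite e Hb aUa orbT.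
      have e2 : tperm p b x = x by apply: tpermD; [apply: contraNneq pUb => -> | rewrite eq_sym].
      rewrite Hpi e2.
      by rewrite (stayW Ub _ Ubf (iUb x xUb) aUb) !orbT.
  + by rewrite cW /= oddD oUa oUb.
  + apply: disjP => x; rewrite !inE => /or3P [/eqP -> | h | h] hz.
    * by move: pnZ; rewrite hz.
    * by move: (disjointFr dUa h); rewrite hz.
    * by move: (disjointFr dUb h); rewrite hz.
- rewrite pairwise_cons gK2 andbT; apply/allP => U; rewrite mem_filter => /andP [/andP [aU bU] Uf].
  have [_ _ pU _] := hU U Uf.
  have dUaU : [disjoint Ua & U].
    apply: (pairwise_mem _ pwf) => //; first by move=> X Y; rewrite disjoint_sym.
    by apply: contraNneq aU => <-.
  have dUbU : [disjoint Ub & U].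
    apply: (pairwise_mem _ pwf) => //; first by move=> X Y; rewrite disjoint_sym.
    by apply: contraNneq bU => <-.
  apply: disjP => x; rewrite !inE => /or3P [/eqP -> | h | h] hz.
  * by move: pU; rewrite hz.
  * by move: (disjointFr dUaU h); rewrite hz.
  * by move: (disjointFr dUbU h); rewrite hz.
- rewrite /= cW.
  have e1 := odd_double_half #|Ua|; have e2 := odd_double_half #|Ub|.
  rewrite oUa in e1; rewrite oUb in e2.
  have -> : (#|Ua| + #|Ub|).+1 = true + (#|Ua|./2 + #|Ub|./2).+1.*2.
    move: e1 e2; move: #|Ua| #|Ub| => u1 u2; clear; rewrite -!muln2 /=; lia.
  rewrite half_bit_double.
  have h2 := sumn_two (fun U : {set T} => #|U|./2) (_ : Ua \in filter (predC P) fam')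
               (_ : Ub \in filter (predC P) fam') neab.
  have h3 := sumn_filter (fun U : {set T} => #|U|./2) P fam'.
  have h4 : Ua \in filter (predC P) fam' by rewrite mem_filter Uaf /= /P aUa.
  have h5 : Ub \in filter (predC P) fam' by rewrite mem_filter Ubf /= /P bUb andbF.
  move: (h2 h4 h5) h3 sumf; rewrite /K.
  move: (sumn _) (sumn _) (sumn _) (#|Ua|./2) (#|Ub|./2) (size ps) => x1 x2 x3 x4 x5 x6.
  clear; lia.
Qed.

Lemma contr_fix p (s : {perm T}) x : (x == p) || (s x == x) -> contr p s x = x.
Proof.
rewrite /contr permM; case: (eqVneq x p) => [->|xp] /= h; first by rewrite tpermL permKV.
have ha : (s^-1)%g p != x.
  apply: contraNneq xp => e.
  by rewrite -[X in X == _](eqP h) -e permKV.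
rewrite tpermD //; first by apply/eqP.
by rewrite eq_sym.
Qed.

Lemma contrs_fix ps : forall (s : {perm T}) x, (x \in ps) || (s x == x) -> contrs ps s x = x.
Proof.
elim: ps => [|p ps IH] s x /=; first by move/eqP.
rewrite inE => h; apply: IH; case/orP: h => [/orP [xp | ->] | sx] //.
  by apply/orP; right; apply/eqP; apply: contr_fix; rewrite xp.
by apply/orP; right; apply/eqP; apply: contr_fix; rewrite sx orbT.
Qed.

End Comb.


Section Transfer.
Variable X : finType.

Lemma cj_inj (s : {perm X}) : injective (fun i : 'I_#|X| => enum_rank (s (enum_val i))).
Proof. by move=> i j e; apply: enum_val_inj; apply: (@perm_inj _ s); apply: enum_rank_inj e. Qed.
Definition cj (s : {perm X}) : {perm 'I_#|X|} := perm (@cj_inj s).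
Lemma cjE s i : cj s i = enum_rank (s (enum_val i)). Proof. by rewrite permE. Qed.

Lemma cj_injective : injective cj.
Proof.
move=> s t e; apply/permP => x; have := congr1 (fun r : {perm _} => r (enum_rank x)) e.
by rewrite /= !cjE enum_rankK => /enum_rank_inj.
Qed.

Lemma hamming_cj s t : hamming (cj s) (cj t) = #|[set x | s x != t x]|.
Proof.
rewrite /hamming -(card_imset _ (@enum_rank_inj X)); apply: eq_card => i.
rewrite inE; apply/idP/imsetP => [h | [x hx ->]].
  exists (enum_val i); rewrite ?inE ?enum_valK //; move: h; rewrite !cjE.
  by apply: contra => /eqP ->.
rewrite !cjE enum_rankK; move: hx; rewrite inE; apply: contra => /eqP /enum_rank_inj ->.
by [].
Qed.

Lemma transfer (A : {set {perm X}}) d : A != set0 ->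
  (forall s t, s \in A -> t \in A -> s != t -> d <= #|[set x | s x != t x]|) ->
  #|A| <= M #|X| d.
Proof.
move=> A0 H; rewrite -(card_imset _ cj_injective) /M.
apply: leq_bigmax_cond.
apply/andP; split; first by rewrite imset_eq0.
apply/forall_inP => s' /imsetP [s sA ->]; apply/forall_inP => t' /imsetP [t tA ->].
apply/implyP => ne; rewrite hamming_cj; apply: H => //.
by apply: contraNneq ne => ->.
Qed.
End Transfer.

Section Restr.
Variable T : finType.
Variable S : {set T}.
Definition XS := {x : T | x \notin S}.

Definition restr (s : {perm T}) : {perm XS} :=
  odflt 1%g [pick r : {perm XS} | [forall x, val (r x) == s (val x)]].

Lemma restrE (s : {perm T}) : (forall x, x \in S -> s x = x) -> forall x : XS, val (restr s x) = s (val x).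
Proof.
move=> hS.
have pf : forall x : XS, s (val x) \notin S.
  move=> x; apply/negP => h; have e := hS _ h.
  move: (valP x) => /negP; apply; rewrite -(perm_inj e); exact: h.
pose f (x : XS) : XS := exist _ (s (val x)) (pf x).
have finj : injective f by move=> x y /(congr1 val) /= /perm_inj /val_inj.
rewrite /restr; case: pickP => [r /forallP h | h] x; first exact/eqP.
by move: (h (perm finj)) => /forallP; case => y; rewrite permE.
Qed.

Lemma card_XS : #|{: XS}| = #|T| - #|S|.
Proof.
rewrite card_sig -(cardsC S) addKn; apply: eq_card => x; rewrite !inE.
by [].
Qed.

Lemma restr_agree (s t : {perm T}) : (forall x, x \in S -> s x = x) -> (forall x, x \in S -> t x = x) ->
  #|[set x : XS | restr s x != restr t x]| + #|[set y | (y \notin S) && (s y == t y)]| = #|T| - #|S|.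
Proof.
move=> hs ht.
have -> : #|[set y | (y \notin S) && (s y == t y)]| = #|[set x : XS | restr s x == restr t x]|.
  rewrite -(card_imset _ val_inj); apply: eq_card => y; rewrite inE.
  apply/idP/imsetP => [/andP [yS e] | [x hx ->]].
    by exists (exist _ y yS) => //; rewrite inE -(inj_eq val_inj) !restrE.
  by move: hx; rewrite inE -(inj_eq val_inj) !restrE // (valP x).
rewrite -card_XS -(cardsC [set x : XS | restr s x == restr t x]) addnC; congr (_ + _).
by apply: eq_card => x; rewrite !inE.
Qed.

End Restr.

From mathcomp Require Import all_algebra all_field.
From mathcomp Require Import action cyclic ring.
Import GRing.Theory.

Section Aff.
Variable F : finFieldType.
Variables (al be : F).
Local Open Scope group_scope.
Local Open Scope ring_scope.
Hypothesis hal : al != 0.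

Definition affm (x : F) : F := al * x + be.
Lemma affm_inj : injective affm.
Proof. by move=> x y; rewrite /affm => /addIr /(mulfI hal). Qed.
Definition rho : {perm F} := perm affm_inj.
Lemma rhoE x : rho x = al * x + be. Proof. by rewrite permE. Qed.

Lemma rhoX j : exists c d, forall y, (rho ^+ j)%g y = c * y + d.
Proof.
elim: j => [|j [c [d IH]]]; first by exists 1, 0 => y; rewrite expg0 perm1 mul1r addr0.
by exists (al * c), (al * d + be) => y; rewrite expgSr permM IH rhoE; ring.
Qed.

Lemma rho_fix2 j x : rho x != x -> (rho ^+ j)%g x = x -> (rho ^+ j)%g = 1%g.
Proof.
move=> nfx fx; have [c [d H]] := rhoX j.
have fx2 : (rho ^+ j)%g (rho x) = rho x.
  by rewrite -permM -expgS expgSr permM fx.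
have hc : c = 1.
  have : c * (rho x - x) = 1 * (rho x - x).
    move: fx2 fx; rewrite !H; set r := rho x => e1 e2.
    apply/eqP; rewrite -subr_eq0; apply/eqP.
    transitivity ((c * r + d - r) - (c * x + d - x)); first ring.
    by rewrite e1 e2 !subrr.
  by apply: mulIf; rewrite subr_eq0.
have hd : d = 0 by move: fx; rewrite H hc mul1r -{2}[x]addr0 => /addrI.
by apply/permP => y; rewrite H hc hd mul1r addr0 perm1.
Qed.

Lemma rhoX1 (j : nat) : al = 1 -> forall y, (rho ^+ j)%g y = y + j%:R * be.
Proof.
move=> a1 y; elim: j => [|j IH]; first by rewrite expg0 perm1 mul0r addr0.
by rewrite expgSr permM IH rhoE a1 mulrSr; ring.
Qed.

Lemma rhoXn1 (j : nat) : al != 1 -> forall y,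
  (rho ^+ j)%g y = al ^+ j * (y - be / (1 - al)) + be / (1 - al).
Proof.
move=> a1 y; have h : 1 - al != 0 by rewrite subr_eq0 eq_sym.
elim: j => [|j IH]; first by rewrite expg0 perm1 expr0 mul1r subrK.
rewrite expgSr permM IH rhoE exprS.
set x0 := be / (1 - al).
have e : al * x0 + be = x0.
  rewrite /x0; apply: (mulIf h); rewrite mulrDl -mulrA !divfK //; ring.
apply/eqP; rewrite -subr_eq0; apply/eqP.
transitivity (al * x0 + be - x0); first ring.
by rewrite e subrr.
Qed.

Lemma orbit_div (U : {set F}) : (forall x, x \in U -> rho x \in U) ->
  (forall x, x \in U -> rho x != x) -> (#[rho]%g %| #|U|)%N.
Proof.
move=> iU nf.
have imU : rho @: U = U.
  apply/eqP; rewrite eqEcard card_imset; last exact: perm_inj.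
  rewrite leqnn andbT; apply/subsetP => y /imsetP [x xU ->]; exact: iU.
have nU : rho \in 'N(U | 'P).
  apply/astabsP => x /=; apply/idP/idP => [h|/iU //].
  by rewrite -imU in h; case/imsetP: h => y yU /perm_inj ->.
have acts : [acts <[rho]>, on U | 'P] by rewrite cycle_subG.
rewrite -(acts_sum_card_orbit acts); apply: dvdn_sum => O /imsetP [x xU ->].
have stab1 : 'C_<[rho]>[x | 'P] = 1%g.
  apply/trivgP/subsetP => g; rewrite inE => /andP [/cycleP [j ->] /astab1P].
  by move=> /= fx; rewrite (rho_fix2 (nf x xU) fx) inE.
by have := card_orbit_stab 'P <[rho]> x; rewrite stab1 cards1 muln1 => ->.
Qed.

Lemma no_two (U1 U2 : {set F}) (m : nat) :
  (al != 1) || (be != 0) ->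
  (forall k, (2 < k)%N -> odd k -> (k <= m.*2.+1)%N -> ~~ (k %| #|F|)%N /\ ~~ (k %| #|F|.-1)%N) ->
  #|F|%:R = 0 :> F ->
  (forall x, x \in U1 -> rho x \in U1) -> (forall x, x \in U2 -> rho x \in U2) ->
  odd #|U1| -> odd #|U2| -> [disjoint U1 & U2] -> (#|U1|./2 + #|U2|./2 <= m)%N -> False.
Proof.
move=> nid hk hq i1 i2 o1 o2 d12 hm.
have [U [iU oU hU nfU]] : exists U : {set F}, [/\ forall x, x \in U -> rho x \in U, odd #|U|,
     (#|U|./2 <= m)%N & forall x, x \in U -> rho x != x].
  case: (boolP [exists x in U1, rho x == x]) => [/exists_inP [x1 x1U /eqP f1] | /exists_inPn nf1].
    case: (boolP [exists x in U2, rho x == x]) => [/exists_inP [x2 x2U /eqP f2] | /exists_inPn nf2].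
      exfalso; have ne : x1 - x2 != 0.
        rewrite subr_eq0; apply: contraTneq x2U => <-; by rewrite (disjointFr d12 x1U).
      move: f1 f2; rewrite !rhoE => f1 f2.
      have ha : al = 1.
        apply: (mulIf ne); rewrite mul1r mulrBr.
        apply/eqP; rewrite -subr_eq0; apply/eqP.
        transitivity ((al * x1 + be - x1) - (al * x2 + be - x2)); first ring.
        by rewrite f1 f2 !subrr.
      have hb : be = 0 by move: f1; rewrite ha mul1r -{2}[x1]addr0 => /addrI.
      by move: nid; rewrite ha hb !eqxx.
    exists U2; split => //; first by lia.
  exists U1; split => //; first by lia.
have kU := orbit_div iU nfU.
have U0 : (0 < #|U|)%N by apply: odd_gt0.
have kle : (#[rho]%g <= m.*2.+1)%N.
  apply: leq_trans (dvdn_leq U0 kU) _.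
  by rewrite -[#|U|]odd_double_half oU add1n ltnS leq_double.
have ko : odd #[rho]%g by apply: dvdn_odd kU oU.
have k1 : #[rho]%g != 1%N.
  rewrite order_eq1; apply/eqP => r1.
  have [x xU] : exists x, x \in U by apply/set0Pn; rewrite -card_gt0.
  by move: (nfU x xU); rewrite r1 perm1 eqxx.
have k2 : (2 < #[rho]%g)%N.
  by move: ko k1 (order_gt0 rho); case: #[rho]%g => [|[|[|]]].
have [nd1 nd2] := hk _ k2 ko kle.
case: (eqVneq al 1) => a1.
  move: nd1; rewrite order_dvdn => /negP; apply; apply/eqP/permP => y.
  by rewrite rhoX1 // hq mul0r addr0 perm1.
move: nd2; rewrite order_dvdn => /negP; apply; apply/eqP/permP => y.
have aq : al ^+ #|F|.-1 = 1.
  apply: (mulfI hal); rewrite mulr1 -exprS prednK ?expf_card //.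
  by apply: leq_trans (finNzRing_gt1 F).
by rewrite rhoXn1 // aq mul1r subrK perm1.
Qed.

End Aff.


Section Fin.
Variable F : finFieldType.
Local Open Scope ring_scope.

Definition aff (ab : F * F) : {perm F} :=
  odflt 1%g [pick r : {perm F} | [forall x, r x == ab.1 * x + ab.2]].

Lemma affE ab : ab.1 != 0 -> forall x, aff ab x = ab.1 * x + ab.2.
Proof.
move=> h x; rewrite /aff; case: pickP => [r /forallP H | H]; first exact/eqP.
by move: (H (rho ab.2 h)) => /forallP; case => y; rewrite rhoE.
Qed.

Definition AGL : {set {perm F}} := [set aff ab | ab in [set ab : F * F | ab.1 != 0]].

Lemma AGL_card : #|AGL| = (#|F| * (#|F| - 1))%N.
Proof.
rewrite card_in_imset.
  have -> : [set ab : F * F | ab.1 != 0] = setX [set~ (0 : F)] setT.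
    by apply/setP => [[a b]]; rewrite !inE andbT.
  by rewrite cardsX cardsC1 cardsT mulnC subn1.
move=> [a1 b1] [a2 b2]; rewrite !inE /= => h1 h2 e.
have e0 := congr1 (fun r : {perm F} => r 0) e; have e1 := congr1 (fun r : {perm F} => r 1) e.
move: e0 e1; rewrite /= !(@affE (a1,b1) h1) !(@affE (a2,b2) h2) /= !mulr0 !add0r !mulr1 => -> /addIr ->.
by [].
Qed.

Lemma AGL_pi s t : s \in AGL -> t \in AGL -> s != t ->
  exists al be (hal : al != 0), ((al != 1) || (be != 0)) /\ forall x, (s^-1)%g (t x) = al * x + be.
Proof.
move=> /imsetP [[a1 b1] h1 ->] /imsetP [[a2 b2] h2 ->] ne; rewrite !inE /= in h1 h2.
have hal : a2 / a1 != 0 by rewrite mulf_neq0 ?invr_neq0.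
exists (a2 / a1), ((b2 - b1) / a1), hal.
  split.
    apply: contraNT ne; rewrite negb_or !negbK => /andP [/eqP e1 /eqP e2].
    have ea : a2 = a1 by apply: (divIf h1); rewrite e1 divff.
    have eb : b2 = b1.
      by apply/eqP; rewrite -subr_eq0; apply/eqP; apply: (mulIf (invr_neq0 h1)); rewrite mul0r.
    by rewrite ea eb.
  move=> x; apply: (@perm_inj _ (aff (a1, b1))); rewrite permKV (@affE (a1,b1) h1) (@affE (a2,b2) h2) /=.
  by field.
Qed.

Lemma agree_bound (m : nat) (ps : seq F) s t : uniq ps -> size ps = m ->
  (forall k, (2 < k)%N -> odd k -> (k <= m.*2.+1)%N -> ~~ (k %| #|F|)%N /\ ~~ (k %| #|F|.-1)%N) ->
  #|F|%:R = 0 :> F -> s \in AGL -> t \in AGL -> s != t ->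
  (#|[set x | [&& x \notin set0, x \notin ps & contrs ps s x == contrs ps t x]]| <= m.+1)%N.
Proof.
move=> ups szm hk hq sA tA ne; rewrite leqNgt; apply/negP => h.
have h' : (size ps + 2 <= #|[set x | [&& x \notin set0, x \notin ps & contrs ps s x == contrs ps t x]]|)%N.
  by rewrite szm addn2.
have all0 : all (fun p => p \notin (set0 : {set F})) ps by apply/allP => x _; rewrite inE.
have [fam [sz [allf pwf sumf]]] := key ups all0 h'.
case: fam sz allf pwf sumf => [|U1 [|U2 rest]] // _.
move=> /= /andP [/and3P [iU1 oU1 _] /andP [/and3P [iU2 oU2 _] _]].
move=> /and3P [/andP [d12 _] _ _] hs.
have [al [be [hal [nid hpi]]]] := AGL_pi sA tA ne.
apply: (@no_two F al be hal U1 U2 m nid hk hq) => //.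
- move=> x xU; rewrite rhoE -hpi; move/forallP: iU1 => /(_ x); rewrite xU; exact.
- move=> x xU; rewrite rhoE -hpi; move/forallP: iU2 => /(_ x); rewrite xU; exact.
- by move: hs; rewrite szm; move: (sumn _) (#|U1|./2) (#|U2|./2) => a b c; clear; lia.
Qed.

End Fin.

Lemma arith1 (n m a c : nat) : 2 * m + 1 < n -> a <= m.+1 -> c + a = n - m -> n - 2 * m - 1 <= c.
Proof. lia. Qed.

Lemma arith2 (n m c : nat) : 2 * m + 1 < n -> n - 2 * m - 1 <= c -> c = 0 -> False.
Proof. lia. Qed.

Theorem corollary5p4 (q m : nat) :
  prime_power q -> 0 < m -> 2 * m + 1 < q ->
  (forall i, 1 <= i <= m ->
     q %% (2 * i + 1) != 0 /\ q %% (2 * i + 1) != 1) ->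
  q * (q - 1) <= M (q - m) (q - 2 * m - 1).
Proof.
move=> [p [k [pp [k0 ->]]]] m0 hq hmod.
have [F pchF cardF] := pPrimePowerField pp k0.
have cardF' : #|F| = (p ^ k)%N := cardF.
rewrite -cardF' in hq hmod *.
have hq0 : (#|F|%:R = 0 :> F)%R.
  by rewrite cardF' natrX (pcharf0 pchF) expr0n (gtn_eqF k0).
have n0 : 0 < #|F| by lia.
have hk : forall j, 2 < j -> odd j -> j <= m.*2.+1 -> ~~ (j %| #|F|) /\ ~~ (j %| #|F|.-1).
  move=> j j2 oj jm.
  have ej : 2 * j./2 + 1 = j by have := odd_double_half j; rewrite oj -muln2 /=; lia.
  have hi : 1 <= j./2 <= m by move: jm ej j2; rewrite -muln2 => ? ? ?; apply/andP; split; lia.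
  have [h0 h1] := hmod _ hi; rewrite ej in h0 h1.
  split; first by rewrite /dvdn.
  apply: contra h1 => /dvdnP [c e].
  rewrite -(prednK n0) e -addn1 modnMDl modn_small //; lia.
set ps := take m (enum F).
have szps : size ps = m.
  by rewrite size_takel // -cardE; apply: leq_trans (ltnW hq); lia.
have ups : uniq ps by rewrite take_uniq // enum_uniq.
set S := [set x in ps].
have cS : #|S| = m by rewrite cardsE; move/card_uniqP: ups ->.
have fixS : forall (s : {perm F}) x, x \in S -> contrs ps s x = x.
  by move=> s x; rewrite inE => h; apply: contrs_fix; rewrite h.
set A := [set restr S (contrs ps s) | s in AGL F].
have hamm : forall s t, s \in AGL F -> t \in AGL F -> s != t ->
    #|F| - 2 * m - 1 <= #|[set x | restr S (contrs ps s) x != restr S (contrs ps t) x]|.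
  move=> s t sA tA ne.
  have := restr_agree (fixS s) (fixS t).
  have := agree_bound ups szps hk hq0 sA tA ne.
  have -> : #|[set x | [&& x \notin set0, x \notin ps & contrs ps s x == contrs ps t x]]|
          = #|[set y | (y \notin S) && (contrs ps s y == contrs ps t y)]|.
    by apply: eq_card => y; rewrite !inE.
  rewrite cS => h1 h2; exact: (arith1 hq h1 h2).
have AGL0 : aff ((1, 0) : F * F)%R \in AGL F by apply: imset_f; rewrite inE /= oner_eq0.
have cA : #|A| = #|F| * (#|F| - 1).
  rewrite -AGL_card; apply: card_in_imset => s t sA tA e; apply/eqP; apply/negPn/negP => ne.
  have := hamm s t sA tA ne; rewrite e.
  have -> : #|[set x | restr S (contrs ps t) x != restr S (contrs ps t) x]| = 0.
    by apply/eqP; rewrite cards_eq0; apply/eqP/setP => x; rewrite !inE eqxx.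
  move=> h; exact: (arith2 hq h).
have := @transfer _ A (#|F| - 2 * m - 1).
rewrite card_XS cS cA; apply.
  by apply/set0Pn; exists (restr S (contrs ps (aff ((1, 0) : F * F)%R))); apply: imset_f.
move=> s' t' /imsetP [s sA ->] /imsetP [t tA ->] ne; apply: hamm => //.
by apply: contraNneq ne => ->.
Qed.
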